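(* Let $\phi$ be a reflexive $(\sigma,\varepsilon)$-sesquilinear form on a right vector space $V$ over a division ring $K$, not identically zero, and suppose there exists a nonzero isotropic vector. Then $V$ is spanned by its isotropic vectors if and only if both (a) $\phi$ is trace-valued, and (b) there exists an isotropic vector not contained in $\mathrm{Rad}(\phi)$.
   Context: Let $K$ be a division ring, $\sigma$ an anti-automorphism of $K$ and $\varepsilon\in K^*$ with $\varepsilon^{\sigma}=\varepsilon^{-1}$ and $t^{\sigma^2}=\varepsilon t\varepsilon^{-1}$ for all $t\in K$. For a right $K$-vector space $V$, a reflexive $(\sigma,\varepsilon)$-sesquilinear form is a map $\phi:V\times V\to K$ with $\phi(x,y\alpha+z\beta)=\phi(x,y)\alpha+\phi(x,z)\beta$ and $\phi(y,x)=\phi(x,y)^{\sigma}\varepsilon$ for all $x,y,z\in V$, $\alpha,\beta\in K$. A vector $a$ is isotropic if $\phi(a,a)=0$. $\mathrm{Rad}(\phi)=\{a\in V:\phi(a,x)=0\ \forall x\in V\}$. The form $\phi$ is trace-valued if $\phi(x,x)\in\{t+t^{\sigma}\varepsilon: t\in K\}$ for every $x\in V$. *)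

(* Defs.v *)
From HB Require Import structures.
From mathcomp Require Import all_boot all_order all_algebra.
Set Implicit Arguments. Unset Strict Implicit. Unset Printing Implicit Defensive.
Import GRing.Theory.
Local Open Scope ring_scope.

Definition division_ring (K : unitRingType) : Prop :=
  forall x : K, x != 0 -> x \is a GRing.unit.

(* A right K-vector space is modelled as a left module over the converse ring K^c:
   for v : V and a : K we write the right scalar product  v.a  as  (a : K^c) *: v.
   Then v.(a*b) = (v.a).b as required. *)
Definition rscale (K : unitRingType) (V : lmodType K^c) (v : V) (a : K) : V :=
  (a : K^c) *: v.

Definition anti_automorphism (K : unitRingType) (sigma : K -> K) : Prop :=
  [/\ forall a b, sigma (a + b) = sigma a + sigma b,
      forall a b, sigma (a * b) = sigma b * sigma a &
      bijective sigma].

Definition sigma_eps_pair (K : unitRingType) (sigma : K -> K) (eps : K) : Prop :=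
  [/\ anti_automorphism sigma, eps != 0, sigma eps = eps^-1 &
      forall t, sigma (sigma t) = eps * t * eps^-1].

Definition reflexive_sesquilinear (K : unitRingType) (V : lmodType K^c)
  (sigma : K -> K) (eps : K) (phi : V -> V -> K) : Prop :=
  (forall x y z (a b : K),
      phi x (rscale y a + rscale z b) = phi x y * a + phi x z * b) /\
  (forall x y, phi y x = sigma (phi x y) * eps).

Definition isotropic (K : unitRingType) (V : lmodType K^c) (phi : V -> V -> K) (a : V) : Prop :=
  phi a a = 0.

Definition in_Rad (K : unitRingType) (V : lmodType K^c) (phi : V -> V -> K) (a : V) : Prop :=
  forall x, phi a x = 0.

Definition trace_valued (K : unitRingType) (V : lmodType K^c)
  (sigma : K -> K) (eps : K) (phi : V -> V -> K) : Prop :=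
  forall x, exists t : K, phi x x = t + sigma t * eps.

Definition spanned_by_isotropic (K : unitRingType) (V : lmodType K^c)
  (phi : V -> V -> K) : Prop :=
  forall v : V, exists s : seq (V * K),
    (forall p, p \in s -> isotropic phi p.1) /\
    v = \sum_(p <- s) rscale p.1 p.2.

(* Main.v *)
Require Import Defs.
From HB Require Import structures.
From mathcomp Require Import all_boot all_order all_algebra.
From Stdlib Require Import Classical.
Set Implicit Arguments. Unset Strict Implicit. Unset Printing Implicit Defensive.
Import GRing.Theory.
Local Open Scope ring_scope.

Theorem mainTheorem4 (K : unitRingType) (V : lmodType K^c)
  (sigma : K -> K) (eps : K) (phi : V -> V -> K) :
  division_ring K ->
  sigma_eps_pair sigma eps ->
  reflexive_sesquilinear sigma eps phi ->
  (exists x y, phi x y != 0) ->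
  (exists a : V, a != 0 /\ isotropic phi a) ->
  (spanned_by_isotropic phi <->
     (trace_valued sigma eps phi /\ exists a : V, isotropic phi a /\ ~ in_Rad phi a)).
Proof.
move=> divK [[sD sM sbij] eps0 seps ss] [lin refl] [x0 [y0 nz0]] _.
have r1 : forall y : V, rscale y 1 = y by move=> y; rewrite /rscale scale1r.
have r00 : rscale (0 : V) 0 = 0 by rewrite /rscale scaler0.
have s0 : sigma 0 = 0.
  have := sD 0 0; rewrite addr0 => /(congr1 (fun z => z - sigma 0)).
  by rewrite subrr addrK => /esym.
have sN : forall t, sigma (- t) = - sigma t.
  by move=> t; apply/eqP; rewrite -addr_eq0 -sD addNr s0.
have pS : forall x y a, phi x (rscale y a) = phi x y * a.
  by move=> x y a; have := lin x y 0 a 0; rewrite r00 addr0 mulr0 addr0.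
have pD : forall x y z, phi x (y + z) = phi x y + phi x z.
  by move=> x y z; have := lin x y z 1 1; rewrite !r1 !mulr1.
have pDl : forall x y z, phi (y + z) x = phi y x + phi z x.
  by move=> x y z; rewrite !(refl x) pD sD mulrDl.
have pSl : forall x y a, phi (rscale y a) x = sigma a * phi y x.
  by move=> x y a; rewrite !(refl x) pS sM mulrA.
have epsU : eps \is a GRing.unit by exact: divK.
split.
- move=> span; split.
  + move=> v; have [s [iso ->]] := span v.
    elim: s iso => [|p s IH] iso.
      exists 0; rewrite big_nil s0 mul0r addr0.
      by have := pS 0 0 0; rewrite r00 mulr0.
    have [|T HT] := IH; first by move=> q qs; apply: iso; rewrite inE qs orbT.
    rewrite big_cons.
    set w := \sum_(q <- s) rscale q.1 q.2.
    have ip : isotropic phi p.1 by apply: iso; rewrite inE eqxx.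
    exists (T + phi w (rscale p.1 p.2)).
    rewrite !pDl !pD HT pSl pS.
    move: ip; rewrite /isotropic => ->; rewrite mul0r mulr0 add0r (refl w (rscale _ _)) sD mulrDl.
    set A := sigma T * eps; set B := sigma _ * eps; set C := phi w _.
    by rewrite [T + C]addrC -!addrA [LHS]addrC -!addrA.
  + have [s [iso Hs]] := span x0.
    suff [p ps np] : exists2 p, p \in s & phi p.1 y0 != 0.
      exists p.1; split; first by apply: iso.
      by move=> R; move: np; rewrite R eqxx.
    move: nz0; rewrite Hs; elim: s {iso Hs} => [|p s IH].
      by rewrite big_nil -{1}r00 pSl s0 mul0r eqxx.
    rewrite big_cons pDl pSl.
    case: (eqVneq (phi p.1 y0) 0) => [E|E] H.
      have [q qs nq] : exists2 q, q \in s & phi q.1 y0 != 0.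
        by apply: IH; move: H; rewrite E mulr0 add0r.
      by exists q => //; rewrite inE qs orbT.
    by exists p => //; rewrite inE eqxx.
- move=> [tv [a [ia na]]].
  have key : forall w, phi a w != 0 -> exists w' c,
      isotropic phi w' /\ w = w' + rscale a c.
    move=> w nw.
    have nw' : phi w a != 0.
      rewrite refl; apply/negP => /eqP E.
      have E2 : sigma (phi a w) = 0 by rewrite -(mulrK epsU (sigma _)) E mul0r.
      move: nw; rewrite -s0 in E2; have [g gK Kg] := sbij.
      by rewrite -(gK (phi a w)) E2 gK eqxx.
    have [t Ht] := tv w.
    set c := - ((phi w a)^-1 * t).
    exists (w + rscale a c), (- c); split.
      move: ia; rewrite /isotropic => ia.
      rewrite pDl !pD !pSl !pS ia mul0r mulr0 addr0 (refl w a) mulrA -sM.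
      have -> : phi w a * c = - t.
        by rewrite /c mulrN mulrA mulrV ?mul1r //; exact: divK.
      rewrite Ht sN mulNr.
      by rewrite addrAC addrK subrr.
    by rewrite -addrA /rscale -scalerDl subrr scale0r addr0.
  have [b nb] : exists b, phi a b != 0.
    apply: NNPP => H; apply: na => x; apply/eqP; apply: NNPP => H2.
    by apply: H; exists x; apply/negP.
  move=> v.
  case: (eqVneq (phi a v) 0) => [E|E].
    have [w1 [c1 [i1 e1]]] := key (v + b) ltac:(by rewrite pD E add0r).
    have [w2 [c2 [i2 e2]]] := key b nb.
    exists [:: (w1, 1); (a, c1); (w2, -1); (a, - c2)]; split.
      by move=> p; rewrite !inE => /or4P [] /eqP -> //=.
    rewrite !big_cons big_nil /= addr0 r1 /rscale scaleN1r scaleNr.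
    have -> : v = (v + b) - b by rewrite addrK.
    rewrite e1 {1}e2 /rscale opprD !addrA.
    done.
  have [w1 [c1 [i1 e1]]] := key v E.
  exists [:: (w1, 1); (a, c1)]; split.
    by move=> p; rewrite !inE => /orP [] /eqP -> //=.
  by rewrite !big_cons big_nil /= addr0 r1.
Qed.
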